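(* Let $f\colon X\to Y$ be a morphism in a pre-Hilbert $*$-category. The following are equivalent: (i) $f$ is strictly contractive; (ii) $f$ has a codilation $(S,s_1,s_2)$ that is a coproduct (i.e. $(S,s_1,s_2)$ is a coproduct of $X$ and $Y$); (iii) $\begin{bmatrix}1 & f^*\\ f & 1\end{bmatrix}\succ 0$ as an endomorphism of $X\oplus Y$. Furthermore, if these equivalent conditions hold, then any codilation $(S,s_1,s_2)$ of $f$ that is a coproduct is a codilator of $f$.
   Context: A $*$-category is a category with a choice of $f^*\colon Y\to X$ for each $f\colon X\to Y$ such that $1^*=1$, $(gf)^*=f^*g^*$, $(f^* )^*=f$; $f$ is an isometry if $f^*f=1$. A pre-Hilbert $*$-category is a $*$-category with (R1) a zero object, (R2) orthonormal biproducts of all pairs of objects (biproducts $(X,s_1,r_1,s_2,r_2)$ with $r_k=s_k^*$; matrices of morphisms between biproducts are taken with respect to these), (R3) an isometric kernel for every morphism, and (R4) every diagonal $\Delta\colon X\to X\oplus X$ a kernel of some morphism. Such a category is additive. For Hermitian endomorphisms $a,b$ of $A$, $a\leq b$ means $b-a=y^*y$ for some $y\colon A\to Y$; $a\prec b$ (equivalently $b\succ a$) means $a\leq b$ and $b-a$ is invertible. A morphism $f$ is strictly contractive if $f^*f\prec 1$. A codilation of $f\colon X\to Y$ is a cospan $(T,t_1,t_2)$ with $t_1\colon X\to T$, $t_2\colon Y\to T$ isometries and $t_2^*t_1=f$. A codilator of $f$ is a codilation $(S,s_1,s_2)$ such that for every codilation $(T,t_1,t_2)$ of $f$ there is a unique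 isometry $t\colon S\to T$ with $ts_1=t_1$ and $ts_2=t_2$. *)

(* Defs.v *)
Set Implicit Arguments.
Unset Strict Implicit.

Record StarCat := {
  ob : Type;
  hom : ob -> ob -> Type;
  comp : forall X Y Z : ob, hom Y Z -> hom X Y -> hom X Z;
  idm : forall X : ob, hom X X;
  comp_assoc : forall (X Y Z W : ob) (h : hom Z W) (g : hom Y Z) (f : hom X Y),
      comp (comp h g) f = comp h (comp g f);
  comp_id_l : forall (X Y : ob) (f : hom X Y), comp (idm Y) f = f;
  comp_id_r : forall (X Y : ob) (f : hom X Y), comp f (idm X) = f;
  star : forall X Y : ob, hom X Y -> hom Y X;
  star_id : forall X : ob, star (idm X) = idm X;
  star_comp : forall (X Y Z : ob) (g : hom Y Z) (f : hom X Y),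
      star (comp g f) = comp (star f) (star g);
  star_invol : forall (X Y : ob) (f : hom X Y), star (star f) = f
}.

Arguments comp {s X Y Z} _ _.
Arguments idm {s} X.
Arguments star {s X Y} _.

Notation "g \o f" := (comp g f) (at level 40, left associativity).
Notation "f ^*" := (star f) (at level 2, format "f ^*").

Section Basic.
Variable C : StarCat.

Definition isometry {X Y : ob C} (f : hom X Y) : Prop := f^* \o f = idm X.

Definition invertible {X Y : ob C} (f : hom X Y) : Prop :=
  exists g : hom Y X, g \o f = idm X /\ f \o g = idm Y.

Definition is_coproduct {X Y S : ob C} (s1 : hom X S) (s2 : hom Y S) : Prop :=
  forall (Z : ob C) (g : hom X Z) (h : hom Y Z),
    exists u : hom S Z, (u \o s1 = g /\ u \o s2 = h) /\
      forall u' : hom S Z, u' \o s1 = g -> u' \o s2 = h -> u' = u.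

Definition is_product {X Y S : ob C} (r1 : hom S X) (r2 : hom S Y) : Prop :=
  forall (Z : ob C) (g : hom Z X) (h : hom Z Y),
    exists u : hom Z S, (r1 \o u = g /\ r2 \o u = h) /\
      forall u' : hom Z S, r1 \o u' = g -> r2 \o u' = h -> u' = u.

Definition is_biproduct (z : forall A B : ob C, hom A B) {X Y S : ob C}
  (s1 : hom X S) (r1 : hom S X) (s2 : hom Y S) (r2 : hom S Y) : Prop :=
  is_coproduct s1 s2 /\ is_product r1 r2 /\
  r1 \o s1 = idm X /\ r2 \o s2 = idm Y /\ r1 \o s2 = z Y X /\ r2 \o s1 = z X Y.

Definition is_orthonormal_biproduct (z : forall A B : ob C, hom A B) {X Y S : ob C}
  (s1 : hom X S) (r1 : hom S X) (s2 : hom Y S) (r2 : hom S Y) : Prop :=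
  is_biproduct z s1 r1 s2 r2 /\ r1 = s1^* /\ r2 = s2^*.

Definition is_kernel (z : forall A B : ob C, hom A B) {K X Y : ob C}
  (k : hom K X) (g : hom X Y) : Prop :=
  g \o k = z K Y /\
  forall (W : ob C) (h : hom W X), g \o h = z W Y ->
    exists u : hom W K, k \o u = h /\ forall u' : hom W K, k \o u' = h -> u' = u.

End Basic.

Record PreHilbert := {
  phC :> StarCat;
  zobj : ob phC;
  zin : forall X : ob phC, hom zobj X;
  zout : forall X : ob phC, hom X zobj;
  zin_uniq : forall (X : ob phC) (f g : hom zobj X), f = g;
  zout_uniq : forall (X : ob phC) (f g : hom X zobj), f = g;
  bp : ob phC -> ob phC -> ob phC;
  bs1 : forall X Y : ob phC, hom X (bp X Y);
  bs2 : forall X Y : ob phC, hom Y (bp X Y);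
  bp_ok : forall X Y : ob phC,
      is_orthonormal_biproduct (fun A B => zin B \o zout A)
        (bs1 X Y) (bs1 X Y)^* (bs2 X Y) (bs2 X Y)^*;
  R3 : forall (X Y : ob phC) (g : hom X Y), exists (K : ob phC) (k : hom K X),
      isometry k /\ is_kernel (fun A B => zin B \o zout A) k g;
  R4 : forall (X : ob phC) (d : hom X (bp X X)),
      (bs1 X X)^* \o d = idm X -> (bs2 X X)^* \o d = idm X ->
      exists (Z : ob phC) (g : hom (bp X X) Z), is_kernel (fun A B => zin B \o zout A) d g
}.

Arguments zin {p} X.
Arguments zout {p} X.
Arguments bp {p} X Y.
Arguments bs1 {p} X Y.
Arguments bs2 {p} X Y.

Section PH.
Variable C : PreHilbert.

Definition zero (A B : ob C) : hom A B := zin B \o zout A.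

(** [h] is the sum [f + g] in the (semi)additive structure induced by the
    biproducts: h = nabla o <f, g>, with <f,g> : X -> Y (+) Y and
    nabla : Y (+) Y -> Y the codiagonal. *)
Definition is_sum {X Y : ob C} (f g h : hom X Y) : Prop :=
  exists p : hom X (bp Y Y),
    (bs1 Y Y)^* \o p = f /\ (bs2 Y Y)^* \o p = g /\
    exists n : hom (bp Y Y) Y, n \o bs1 Y Y = idm Y /\ n \o bs2 Y Y = idm Y /\
      h = n \o p.

Definition hle {A : ob C} (a b : hom A A) : Prop :=
  exists (Y' : ob C) (y : hom A Y'), is_sum a (y^* \o y) b.

Definition hprec {A : ob C} (a b : hom A A) : Prop :=
  exists c : hom A A, is_sum a c b /\
    (exists (Y' : ob C) (y : hom A Y'), c = y^* \o y) /\ invertible c.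

Definition strictly_contractive {X Y : ob C} (f : hom X Y) : Prop :=
  hprec (f^* \o f) (idm X).

Definition is_codilation {X Y : ob C} (f : hom X Y) (T : ob C)
  (t1 : hom X T) (t2 : hom Y T) : Prop :=
  isometry t1 /\ isometry t2 /\ t2^* \o t1 = f.

Definition is_codilator {X Y : ob C} (f : hom X Y) (S : ob C)
  (s1 : hom X S) (s2 : hom Y S) : Prop :=
  is_codilation f s1 s2 /\
  forall (T : ob C) (t1 : hom X T) (t2 : hom Y T), is_codilation f t1 t2 ->
    exists t : hom S T, (isometry t /\ t \o s1 = t1 /\ t \o s2 = t2) /\
      forall t' : hom S T, isometry t' -> t' \o s1 = t1 -> t' \o s2 = t2 -> t' = t.

Definition is_matrix2 {X Y : ob C} (m : hom (bp X Y) (bp X Y))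
  (a : hom X X) (b : hom Y X) (c : hom X Y) (d : hom Y Y) : Prop :=
  (bs1 X Y)^* \o m \o bs1 X Y = a /\ (bs1 X Y)^* \o m \o bs2 X Y = b /\
  (bs2 X Y)^* \o m \o bs1 X Y = c /\ (bs2 X Y)^* \o m \o bs2 X Y = d.

End PH.

(* Main.v *)
Require Import Defs.
From Stdlib Require Import ClassicalEpsilon.

Section Dev.
Variable C : PreHilbert.
Implicit Types A B D E W : ob C.

Local Notation z := (@zero C).

Lemma cA {A B D E} (h : hom D E) (g : hom B D) (f : hom A B) : h \o g \o f = h \o (g \o f).
Proof. apply comp_assoc. Qed.

Lemma z_l {A B D} (h : hom A B) : z B D \o h = z A D.
Proof. unfold zero. rewrite cA. f_equal. apply zout_uniq. Qed.

Lemma z_r {A B D} (h : hom B D) : h \o z A B = z A D.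
Proof. unfold zero. rewrite <- cA. f_equal. apply zin_uniq. Qed.

Lemma z_star {A B} : (z A B)^* = z B A.
Proof. unfold zero. rewrite star_comp. f_equal; [apply zin_uniq| apply zout_uniq]. Qed.

Lemma id_l {A B} (f : hom A B) : idm B \o f = f. Proof. apply comp_id_l. Qed.
Lemma id_r {A B} (f : hom A B) : f \o idm A = f. Proof. apply comp_id_r. Qed.
Lemma sinv {A B} (f : hom A B) : f^*^* = f. Proof. apply star_invol. Qed.

Section BP.
Variables A B : ob C.
Let i1 := bs1 A B.
Let i2 := bs2 A B.

Lemma bp11 : i1^* \o i1 = idm A.
Proof. destruct (bp_ok A B) as [[_ [_ [H _]]] _]. exact H. Qed.
Lemma bp22 : i2^* \o i2 = idm B.
Proof. destruct (bp_ok A B) as [[_ [_ [_ [H _]]]] _]. exact H. Qed.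
Lemma bp12 : i1^* \o i2 = z B A.
Proof. destruct (bp_ok A B) as [[_ [_ [_ [_ [H _]]]]] _]. exact H. Qed.
Lemma bp21 : i2^* \o i1 = z A B.
Proof. destruct (bp_ok A B) as [[_ [_ [_ [_ [_ H]]]]] _]. exact H. Qed.

Lemma ext_out {W} (h h' : hom W (bp A B)) :
  i1^* \o h = i1^* \o h' -> i2^* \o h = i2^* \o h' -> h = h'.
Proof.
  intros H1 H2. destruct (bp_ok A B) as [[_ [Hp _]] _].
  destruct (Hp W (i1^* \o h) (i2^* \o h)) as [u [_ Hu]].
  rewrite (Hu h) by reflexivity. symmetry. apply Hu; symmetry; assumption.
Qed.

Lemma ext_in {W} (h h' : hom (bp A B) W) :
  h \o i1 = h' \o i1 -> h \o i2 = h' \o i2 -> h = h'.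
Proof.
  intros H1 H2. destruct (bp_ok A B) as [[Hc _] _].
  destruct (Hc W (h \o i1) (h \o i2)) as [u [_ Hu]].
  rewrite (Hu h) by reflexivity. symmetry. apply Hu; symmetry; assumption.
Qed.

Lemma pair_ex {W} (f : hom W A) (g : hom W B) :
  exists h : hom W (bp A B), i1^* \o h = f /\ i2^* \o h = g.
Proof.
  destruct (bp_ok A B) as [[_ [Hp _]] _].
  destruct (Hp W f g) as [u [Hu _]]. exists u. exact Hu.
Qed.
End BP.

Definition pair {W A B} (f : hom W A) (g : hom W B) : hom W (bp A B) :=
  proj1_sig (constructive_indefinite_description _ (pair_ex A B f g)).

Lemma pair1 {W A B} (f : hom W A) (g : hom W B) : (bs1 A B)^* \o pair f g = f.
Proof. unfold pair. destruct constructive_indefinite_description as [h [H1 H2]]. exact H1. Qed.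
Lemma pair2 {W A B} (f : hom W A) (g : hom W B) : (bs2 A B)^* \o pair f g = g.
Proof. unfold pair. destruct constructive_indefinite_description as [h [H1 H2]]. exact H2. Qed.

Definition copair {W A B} (f : hom A W) (g : hom B W) : hom (bp A B) W :=
  (pair f^* g^*)^*.

Lemma copair1 {W A B} (f : hom A W) (g : hom B W) : copair f g \o bs1 A B = f.
Proof.
  unfold copair. rewrite <- (sinv (bs1 A B)), <- star_comp, pair1. apply sinv.
Qed.
Lemma copair2 {W A B} (f : hom A W) (g : hom B W) : copair f g \o bs2 A B = g.
Proof.
  unfold copair. rewrite <- (sinv (bs2 A B)), <- star_comp, pair2. apply sinv.
Qed.

Lemma pair_star {W A B} (f : hom W A) (g : hom W B) : (pair f g)^* = copair f^* g^*.
Proof. unfold copair. rewrite !sinv. reflexivity. Qed.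
Lemma copair_star {W A B} (f : hom A W) (g : hom B W) : (copair f g)^* = pair f^* g^*.
Proof. unfold copair. apply sinv. Qed.

Lemma pair_comp {V W A B} (f : hom W A) (g : hom W B) (h : hom V W) :
  pair f g \o h = pair (f \o h) (g \o h).
Proof. apply ext_out; rewrite <- cA; rewrite ?pair1, ?pair2; reflexivity. Qed.

Lemma copair_comp {V W A B} (f : hom A W) (g : hom B W) (h : hom W V) :
  h \o copair f g = copair (h \o f) (h \o g).
Proof. apply ext_in; rewrite ?cA; rewrite ?copair1, ?copair2; reflexivity. Qed.

Lemma pair_eta {W A B} (h : hom W (bp A B)) : pair ((bs1 A B)^* \o h) ((bs2 A B)^* \o h) = h.
Proof. apply ext_out; rewrite ?pair1, ?pair2; reflexivity. Qed.

Lemma pair_i1 {W A B} (f : hom W A) : pair f (z W B) = bs1 A B \o f.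
Proof. apply ext_out; rewrite ?pair1, ?pair2, <- cA, ?bp11, ?bp21, ?id_l, ?z_l; reflexivity. Qed.
Lemma pair_i2 {W A B} (g : hom W B) : pair (z W A) g = bs2 A B \o g.
Proof. apply ext_out; rewrite ?pair1, ?pair2, <- cA, ?bp12, ?bp22, ?id_l, ?z_l; reflexivity. Qed.

Definition add {A B} (f g : hom A B) : hom A B := copair (idm B) (idm B) \o pair f g.

Lemma add_alt {A B} (f g : hom A B) : add f g = copair f g \o pair (idm A) (idm A).
Proof.
  unfold add.
  set (mid := pair (f \o (bs1 A A)^*) (g \o (bs2 A A)^*)).
  assert (H1 : mid \o pair (idm A) (idm A) = pair f g).
  { unfold mid. rewrite pair_comp, !cA, pair1, pair2, !id_r. reflexivity. }
  assert (H2 : copair (idm B) (idm B) \o mid = copair f g).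
  { apply ext_in; rewrite cA; unfold mid; rewrite pair_comp, !cA.
    - rewrite bp11, bp21, id_r, z_r, pair_i1, <- cA, copair1, id_l, copair1. reflexivity.
    - rewrite bp12, bp22, id_r, z_r, pair_i2, <- cA, copair2, id_l, copair2. reflexivity. }
  rewrite <- H1, <- cA, H2. reflexivity.
Qed.

Lemma add_0r {A B} (f : hom A B) : add f (z A B) = f.
Proof. unfold add. rewrite pair_i1, <- cA, copair1, id_l. reflexivity. Qed.
Lemma add_0l {A B} (f : hom A B) : add (z A B) f = f.
Proof. unfold add. rewrite pair_i2, <- cA, copair2, id_l. reflexivity. Qed.

Lemma add_compl {A B D} (h : hom B D) (f g : hom A B) : h \o add f g = add (h \o f) (h \o g).
Proof. rewrite !add_alt, <- cA, copair_comp. reflexivity. Qed.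
Lemma add_compr {A B D} (h : hom D A) (f g : hom A B) : add f g \o h = add (f \o h) (g \o h).
Proof. unfold add. rewrite cA, pair_comp. reflexivity. Qed.

Lemma pair_add {W A B} (a b : hom W A) (c d : hom W B) :
  pair (add a b) (add c d) = add (pair a c) (pair b d).
Proof. apply ext_out; rewrite add_compl, ?pair1, ?pair2; reflexivity. Qed.

Lemma interchange {A B} (a b c d : hom A B) :
  add (add a b) (add c d) = add (add a c) (add b d).
Proof.
  transitivity (copair (idm B) (idm B) \o pair (add a b) (add c d)); [reflexivity|].
  rewrite pair_add, add_compl. reflexivity.
Qed.

Lemma add_comm {A B} (a b : hom A B) : add a b = add b a.
Proof.
  pose proof (interchange (z A B) a b (z A B)) as H.
  rewrite !add_0l, !add_0r in H. exact H.
Qed.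

Lemma add_assoc {A B} (a b c : hom A B) : add (add a b) c = add a (add b c).
Proof.
  pose proof (interchange a b (z A B) c) as H.
  rewrite !add_0l, !add_0r in H. exact H.
Qed.

Lemma add_star {A B} (f g : hom A B) : (add f g)^* = add f^* g^*.
Proof.
  unfold add. rewrite star_comp, pair_star, copair_star, star_id, <- add_alt. reflexivity.
Qed.

Lemma id_split {A B} : idm (bp A B) = add (bs1 A B \o (bs1 A B)^*) (bs2 A B \o (bs2 A B)^*).
Proof.
  apply ext_in; rewrite add_compr, id_l, !cA.
  - rewrite bp11, bp21, id_r, z_r, add_0r. reflexivity.
  - rewrite bp12, bp22, id_r, z_r, add_0l. reflexivity.
Qed.

Lemma comp_split {U V A B} (M : hom (bp A B) V) (N : hom U (bp A B)) :
  M \o N = add ((M \o bs1 A B) \o ((bs1 A B)^* \o N)) ((M \o bs2 A B) \o ((bs2 A B)^* \o N)).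
Proof.
  rewrite <- (id_l N) at 1. rewrite <- cA, id_split, add_compl, add_compr, !cA. reflexivity.
Qed.

Lemma copair_pair {U V A B} (u : hom A V) (v : hom B V) (f : hom U A) (g : hom U B) :
  copair u v \o pair f g = add (u \o f) (v \o g).
Proof. rewrite comp_split, copair1, copair2, pair1, pair2. reflexivity. Qed.

Lemma is_sum_iff {A B} (f g h : hom A B) : is_sum f g h <-> h = add f g.
Proof.
  split.
  - intros [p [H1 [H2 [n [Hn1 [Hn2 Hh]]]]]].
    assert (Hp : p = pair f g) by (apply ext_out; rewrite ?pair1, ?pair2; assumption).
    assert (Hn : n = copair (idm B) (idm B)) by (apply ext_in; rewrite ?copair1, ?copair2; assumption).
    rewrite Hh, Hp, Hn. reflexivity.
  - intros ->. exists (pair f g). split; [apply pair1|]. split; [apply pair2|].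
    exists (copair (idm B) (idm B)). split; [apply copair1|]. split; [apply copair2|]. reflexivity.
Qed.


Lemma kern {K A B} (k : hom K A) (g : hom A B) :
  is_kernel (fun A0 B0 => zin B0 \o zout A0) k g ->
  g \o k = z K B /\ forall W (h : hom W A), g \o h = z W B -> exists u, k \o u = h.
Proof.
  intros [H1 H2]. split; [exact H1|]. intros W h Hh. destruct (H2 W h Hh) as [u [Hu _]]. exists u; exact Hu.
Qed.

Lemma neg_ex A : exists n : hom A A, add (idm A) n = z A A.
Proof.
  destruct (R4 (d:=pair (idm A) (idm A)) (pair1 _ _) (pair2 _ _)) as [Z [g Hg]].
  apply kern in Hg. destruct Hg as [Hg0 Hgk].
  set (i1 := bs1 A A) in *. set (i2 := bs2 A A) in *.
  set (a := g \o i1). set (b := g \o i2).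
  assert (Hab : add a b = z A Z).
  { unfold a, b. rewrite <- add_compl.
    replace (add i1 i2) with (pair (idm A) (idm A)); [exact Hg0|].
    apply ext_out; rewrite add_compl, ?pair1, ?pair2; unfold i1, i2;
      rewrite ?bp11, ?bp22, ?bp12, ?bp21, ?add_0r, ?add_0l; reflexivity. }
  assert (Hmono : forall W (u u' : hom W A), a \o u = a \o u' -> u = u').
  { intros W u u' Huu.
    assert (H : g \o pair u u' = z W Z).
    { rewrite (comp_split g), pair1, pair2. fold i1 i2. fold a b.
      rewrite Huu, <- add_compr, Hab, z_l. reflexivity. }
    destruct (Hgk W _ H) as [t Ht].
    pose proof (pair1 u u') as E1. pose proof (pair2 u u') as E2.
    rewrite <- Ht, <- cA in E1, E2. rewrite pair1, id_l in E1. rewrite pair2, id_l in E2.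
    rewrite <- E1, <- E2. reflexivity. }
  destruct (R3 (copair (idm A) (idm A))) as [K [j [Hjiso Hj]]].
  apply kern in Hj. destruct Hj as [Hj0 Hjk].
  assert (Hg' : copair (idm A) (idm A) \o g^* = z Z A).
  { rewrite <- (sinv (copair _ _)), <- star_comp, copair_star, star_id, Hg0. apply z_star. }
  destruct (Hjk Z _ Hg') as [w Hw].
  set (j1 := i1^* \o j). set (j2 := i2^* \o j).
  assert (Hj12 : add j1 j2 = z K A).
  { rewrite <- Hj0, <- (pair_eta j), copair_pair, !id_l. reflexivity. }
  set (P := j1^* \o j1). set (Q := j2^* \o j2). set (R := j1^* \o j2).
  assert (HPQ : add P Q = idm K).
  { rewrite <- Hjiso. rewrite <- (pair_eta j) at 1 2. rewrite pair_star, copair_pair. reflexivity. }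
  assert (HPR : add P R = z K K).
  { unfold P, R. rewrite <- add_compl, Hj12. apply z_r. }
  assert (HRQ : add R Q = z K K).
  { unfold Q, R. rewrite <- add_compr, <- add_star, Hj12, z_star. apply z_l. }
  assert (HRsQ : add R^* Q = z K K).
  { unfold Q, R. rewrite star_comp, sinv, <- add_compl, Hj12. apply z_r. }
  assert (HPeQ : P = Q).
  { rewrite <- (add_0r P), <- HRQ, <- add_assoc, HPR, add_0l. reflexivity. }
  set (T := add R R^*).
  assert (HT : add (idm K) T = z K K).
  { unfold T. rewrite <- HPQ, interchange, HPR, add_0l, add_comm. exact HRsQ. }
  assert (Hj2 : j2 = j1 \o T).
  { rewrite <- (add_0r j2), <- (z_r j1), <- HT, add_compl, id_r, <- add_assoc,
      (add_comm j2 j1), Hj12, add_0l. reflexivity. }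
  assert (HTs : T^* = T).
  { unfold T. rewrite add_star, sinv. apply add_comm. }
  assert (Ha : a = w^* \o j1^*).
  { unfold a, j1. rewrite <- star_comp, cA, Hw, star_comp, sinv, sinv. reflexivity. }
  assert (Hb : b = w^* \o j2^*).
  { unfold b, j2. rewrite <- star_comp, cA, Hw, star_comp, sinv, sinv. reflexivity. }
  exists (j1 \o add T T \o j1^*).
  apply Hmono. rewrite add_compl, id_r, z_r.
  assert (Han : a \o (j1 \o add T T \o j1^*) = b).
  { rewrite Ha, Hb, Hj2, star_comp, HTs, !cA. f_equal.
    rewrite <- (cA j1^* j1). fold P. rewrite <- cA, add_compl, <- add_compr.
    replace (add P P) with (idm K) by (rewrite HPeQ at 2; symmetry; exact HPQ).
    rewrite id_l. reflexivity. }
  rewrite Han. exact Hab.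
Qed.

Definition nm A : hom A A := proj1_sig (constructive_indefinite_description _ (neg_ex A)).
Lemma nm_spec A : add (idm A) (nm A) = z A A.
Proof. unfold nm. destruct constructive_indefinite_description. assumption. Qed.

Definition neg {A B} (f : hom A B) : hom A B := nm B \o f.

Lemma add_neg {A B} (f : hom A B) : add f (neg f) = z A B.
Proof. unfold neg. rewrite <- (id_l f) at 1. rewrite <- add_compr, nm_spec. apply z_l. Qed.

Lemma neg_uniq {A B} (f g : hom A B) : add f g = z A B -> g = neg f.
Proof.
  intros H. rewrite <- (add_0r g), <- (add_neg f), <- add_assoc, (add_comm g f), H, add_0l.
  reflexivity.
Qed.

Lemma neg_compl {A B D} (h : hom B D) (f : hom A B) : h \o neg f = neg (h \o f).
Proof. apply neg_uniq. rewrite <- add_compl, add_neg. apply z_r. Qed.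
Lemma neg_compr {A B D} (h : hom D A) (f : hom A B) : neg f \o h = neg (f \o h).
Proof. apply neg_uniq. rewrite <- add_compr, add_neg. apply z_l. Qed.
Lemma neg_star {A B} (f : hom A B) : (neg f)^* = neg f^*.
Proof. apply neg_uniq. rewrite <- add_star, add_neg. apply z_star. Qed.
Lemma neg_neg {A B} (f : hom A B) : neg (neg f) = f.
Proof. symmetry. apply neg_uniq. rewrite add_comm. apply add_neg. Qed.
Lemma neg_z {A B} : neg (z A B) = z A B.
Proof. symmetry. apply neg_uniq. apply add_0l. Qed.
Lemma add_negl {A B} (f : hom A B) : add (neg f) f = z A B.
Proof. rewrite add_comm. apply add_neg. Qed.
Lemma add_cancel {A B} (f g : hom A B) : add f (add (neg f) g) = g.
Proof. rewrite <- add_assoc, add_neg. apply add_0l. Qed.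
Lemma add_cancel' {A B} (f g : hom A B) : add (neg f) (add f g) = g.
Proof. rewrite <- add_assoc, add_negl. apply add_0l. Qed.
Lemma solve_l {A B} (x y s : hom A B) : add x y = s -> x = add s (neg y).
Proof. intros <-. rewrite add_assoc, add_neg, add_0r. reflexivity. Qed.


Lemma mat_ext {A B D E} (M N : hom (bp A B) (bp D E)) :
  (bs1 D E)^* \o (M \o bs1 A B) = (bs1 D E)^* \o (N \o bs1 A B) ->
  (bs1 D E)^* \o (M \o bs2 A B) = (bs1 D E)^* \o (N \o bs2 A B) ->
  (bs2 D E)^* \o (M \o bs1 A B) = (bs2 D E)^* \o (N \o bs1 A B) ->
  (bs2 D E)^* \o (M \o bs2 A B) = (bs2 D E)^* \o (N \o bs2 A B) -> M = N.
Proof. intros. apply ext_in; apply ext_out; assumption. Qed.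

Lemma gram {A B W} (a : hom A W) (b : hom B W) :
  (bs1 A B)^* \o ((copair a b)^* \o (copair a b \o bs1 A B)) = a^* \o a /\
  (bs1 A B)^* \o ((copair a b)^* \o (copair a b \o bs2 A B)) = a^* \o b /\
  (bs2 A B)^* \o ((copair a b)^* \o (copair a b \o bs1 A B)) = b^* \o a /\
  (bs2 A B)^* \o ((copair a b)^* \o (copair a b \o bs2 A B)) = b^* \o b.
Proof.
  rewrite copair1, copair2, <- !cA, <- !star_comp, copair1, copair2. tauto.
Qed.

Lemma coprod_iso {X Y S} (s1 : hom X S) (s2 : hom Y S) : is_coproduct s1 s2 ->
  exists u, u \o copair s1 s2 = idm _ /\ copair s1 s2 \o u = idm S.
Proof.
  intros H. destruct (H (bp X Y) (bs1 X Y) (bs2 X Y)) as [u [[Hu1 Hu2] _]].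
  exists u. split.
  - apply ext_in; rewrite cA, ?copair1, ?copair2, id_l; assumption.
  - destruct (H S s1 s2) as [v [_ Hv]].
    transitivity v; [|symmetry]; apply Hv; rewrite ?cA, ?Hu1, ?Hu2, ?copair1, ?copair2, ?id_l;
      reflexivity.
Qed.

Lemma iso_coprod {X Y S} (s1 : hom X S) (s2 : hom Y S) :
  (exists u, u \o copair s1 s2 = idm _ /\ copair s1 s2 \o u = idm S) -> is_coproduct s1 s2.
Proof.
  intros [u [H1 H2]] Z g h. exists (copair g h \o u). split; [split|].
  - transitivity ((copair g h \o u) \o (copair s1 s2 \o bs1 X Y)); [rewrite copair1; reflexivity|].
    rewrite !cA, <- (cA u), H1, id_l, copair1. reflexivity.
  - transitivity ((copair g h \o u) \o (copair s1 s2 \o bs2 X Y)); [rewrite copair2; reflexivity|].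
    rewrite !cA, <- (cA u), H1, id_l, copair2. reflexivity.
  - intros u' E1 E2.
    assert (E : u' \o copair s1 s2 = copair g h).
    { apply ext_in; rewrite cA, ?copair1, ?copair2; assumption. }
    rewrite <- E, cA, H2, id_r. reflexivity.
Qed.

Lemma codil_part {X Y S : ob C} (f : hom X Y) (s1 : hom X S) (s2 : hom Y S) :
  is_codilation f s1 s2 -> is_coproduct s1 s2 -> is_codilator f s1 s2.
Proof.
  intros Hs Hc. split; [exact Hs|]. intros T t1 t2 Ht.
  destruct (Hc T t1 t2) as [t [[E1 E2] Hu]].
  cut (isometry t).
  { intros Hi. exists t. split; [tauto|]. intros t' _ F1 F2. apply Hu; assumption. }
  destruct (coprod_iso _ _ Hc) as [u [Hu1 Hu2]].
  destruct Hs as [S1 [S2 S3]]. destruct Ht as [T1 [T2 T3]].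
  unfold isometry in *.
  assert (Ht' : t \o copair s1 s2 = copair t1 t2) by (rewrite copair_comp, E1, E2; reflexivity).
  assert (G : (copair t1 t2)^* \o copair t1 t2 = (copair s1 s2)^* \o copair s1 s2).
  { destruct (gram t1 t2) as [G11 [G12 [G21 G22]]].
    destruct (gram s1 s2) as [H11 [H12 [H21 H22]]].
    apply mat_ext; rewrite !cA; [rewrite G11, H11 | rewrite G12, H12 | rewrite G21, H21 | rewrite G22, H22];
      try congruence.
    transitivity ((t2^* \o t1)^*); [rewrite star_comp, sinv; reflexivity|].
    rewrite T3, <- S3, star_comp, sinv. reflexivity. }
  rewrite <- Ht', star_comp, !cA, <- (cA t^* t) in G.
  assert (Hus : u^* \o (copair s1 s2)^* = idm S) by (rewrite <- star_comp, Hu2; apply star_id).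
  transitivity (u^* \o ((copair s1 s2)^* \o (t^* \o t \o copair s1 s2)) \o u).
  - rewrite <- !cA, Hus, id_l, cA, Hu2, id_r. reflexivity.
  - rewrite G, !cA, Hu2, id_r. exact Hus.
Qed.


Lemma ii_iii {X Y S : ob C} (f : hom X Y) (s1 : hom X S) (s2 : hom Y S) :
  is_codilation f s1 s2 -> is_coproduct s1 s2 ->
  exists m : hom (bp X Y) (bp X Y),
    is_matrix2 m (idm X) f^* f (idm Y) /\ hprec (@zero C (bp X Y) (bp X Y)) m.
Proof.
  intros [S1 [S2 S3]] Hc. unfold isometry in *.
  destruct (coprod_iso _ _ Hc) as [u [Hu1 Hu2]].
  exists ((copair s1 s2)^* \o copair s1 s2).
  destruct (gram s1 s2) as [H11 [H12 [H21 H22]]].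
  split.
  - unfold is_matrix2. rewrite !cA, H11, H12, H21, H22, S1, S2, S3.
    split; [reflexivity|]. split; [|split; reflexivity].
    rewrite <- S3, star_comp, sinv. reflexivity.
  - exists ((copair s1 s2)^* \o copair s1 s2). split; [apply is_sum_iff; rewrite add_0l; reflexivity|].
    split; [eexists; eexists; reflexivity|].
    exists (u \o u^*). split.
    + rewrite !cA, <- (cA u^*), <- star_comp, Hu2, star_id, id_l. exact Hu1.
    + rewrite !cA, <- (cA (copair s1 s2)), Hu2, id_l, <- star_comp, Hu1. apply star_id.
Qed.

Lemma entry_mul {U U' V' W A B} (r : hom V' W) (M : hom (bp A B) V') (N : hom U (bp A B)) (cl : hom U' U) :
  r \o (M \o (N \o cl)) =
  add ((r \o (M \o bs1 A B)) \o ((bs1 A B)^* \o (N \o cl)))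
      ((r \o (M \o bs2 A B)) \o ((bs2 A B)^* \o (N \o cl))).
Proof. rewrite (comp_split M (N \o cl)), add_compl, !cA. reflexivity. Qed.

Lemma iii_i {X Y : ob C} (f : hom X Y) :
  (exists m : hom (bp X Y) (bp X Y),
    is_matrix2 m (idm X) f^* f (idm Y) /\ hprec (@zero C (bp X Y) (bp X Y)) m) ->
  strictly_contractive f.
Proof.
  intros [m [[M11 [M12 [M21 M22]]] [c [Hs [[Y' [y Hy]] [c' [Hc1 Hc2]]]]]]].
  apply is_sum_iff in Hs. rewrite add_0l in Hs. subst c.
  rewrite cA in M11; rewrite cA in M12; rewrite cA in M21; rewrite cA in M22.
  set (i1 := bs1 X Y) in *. set (i2 := bs2 X Y) in *.
  assert (E11 : i1^* \o (m \o (c' \o i1)) = idm X)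
    by (rewrite <- (cA m), Hc2, id_l; apply bp11).
  assert (E21 : i2^* \o (m \o (c' \o i1)) = z X Y)
    by (rewrite <- (cA m), Hc2, id_l; apply bp21).
  assert (F11 : i1^* \o (c' \o (m \o i1)) = idm X)
    by (rewrite <- (cA c'), Hc1, id_l; apply bp11).
  assert (F12 : i1^* \o (c' \o (m \o i2)) = z Y X)
    by (rewrite <- (cA c'), Hc1, id_l; apply bp12).
  rewrite entry_mul in E11; rewrite entry_mul in E21; rewrite entry_mul in F11; rewrite entry_mul in F12.
  fold i1 i2 in E11, E21, F11, F12.
  rewrite ?M11, ?M12, ?M21, ?M22, ?id_l, ?id_r in E11; rewrite ?M11, ?M12, ?M21, ?M22, ?id_l, ?id_r in E21; rewrite ?M11, ?M12, ?M21, ?M22, ?id_l, ?id_r in F11; rewrite ?M11, ?M12, ?M21, ?M22, ?id_l, ?id_r in F12.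
  set (a := i1^* \o (c' \o i1)) in *.
  set (cc := i2^* \o (c' \o i1)) in *.
  set (b := i1^* \o (c' \o i2)) in *.
  apply neg_uniq in E21. apply neg_uniq in F12.
  rewrite E21 in E11. rewrite F12 in F11.
  set (D := add (idm X) (neg (f^* \o f))).
  assert (HD1 : D \o a = idm X).
  { unfold D. rewrite add_compr, id_l, neg_compr, cA, <- neg_compl. exact E11. }
  assert (HD2 : a \o D = idm X).
  { unfold D. rewrite add_compl, id_r, neg_compl, <- cA, <- neg_compr. exact F11. }
  set (y1 := y \o i1). set (y2 := y \o i2).
  assert (Y11 : y1^* \o y1 = idm X).
  { unfold y1. rewrite star_comp, cA, <- (cA y^*), <- Hy. exact M11. }
  assert (Y12 : y1^* \o y2 = f^*).
  { unfold y1, y2. rewrite star_comp, cA, <- (cA y^*), <- Hy. exact M12. }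
  assert (Y21 : y2^* \o y1 = f).
  { unfold y1, y2. rewrite star_comp, cA, <- (cA y^*), <- Hy. exact M21. }
  assert (Y22 : y2^* \o y2 = idm Y).
  { unfold y1, y2. rewrite star_comp, cA, <- (cA y^*), <- Hy. exact M22. }
  set (zz := add y1 (neg (y2 \o f))).
  assert (HZ : zz^* \o zz = D).
  { unfold zz. rewrite add_star, neg_star, star_comp, add_compr, !add_compl.
    rewrite !neg_compl, !neg_compr, neg_neg, Y11, <- (cA y1^* y2), Y12, (cA f^* y2^* y1), Y21.
    rewrite (cA f^* y2^*), <- (cA y2^* y2), Y22, id_l.
    rewrite add_negl, add_0r. reflexivity. }
  exists D. split.
  - apply is_sum_iff. unfold D. rewrite (add_comm (idm X)), add_cancel. reflexivity.
  - split; [exists Y', zz; symmetry; exact HZ|]. exists a. split; assumption.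
Qed.


Lemma i_ii {X Y : ob C} (f : hom X Y) : strictly_contractive f ->
  exists (S : ob C) (s1 : hom X S) (s2 : hom Y S), is_codilation f s1 s2 /\ is_coproduct s1 s2.
Proof.
  intros [c [Hs [[Y' [y Hy]] [c' [Hc1 Hc2]]]]].
  apply is_sum_iff in Hs.
  destruct (R3 y^*) as [K [k [Hk Hkk]]]. apply kern in Hkk. destruct Hkk as [Hk0 Hkk].
  destruct (R3 k^*) as [J [j [Hj Hjk]]]. apply kern in Hjk. destruct Hjk as [Hj0 Hjk].
  unfold isometry in Hk, Hj.
  assert (Hky : k^* \o y = z X K).
  { transitivity ((y^* \o k)^*); [rewrite star_comp, sinv; reflexivity|]. rewrite Hk0. apply z_star. }
  destruct (Hjk X y Hky) as [y0 Hy0].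
  assert (Hy0' : y0 = j^* \o y) by (rewrite <- Hy0, <- cA, Hj, id_l; reflexivity).
  assert (Hc0 : y0^* \o y0 = c).
  { rewrite Hy, <- Hy0, star_comp, cA, <- (cA j^* j), Hj, id_l. reflexivity. }
  set (e := y \o (c' \o y^*)).
  set (dd := add (idm Y') (neg e)).
  assert (Hyd : y^* \o dd = z Y' X).
  { unfold dd, e. rewrite add_compl, neg_compl, id_r, <- (cA y^* y), <- Hy, <- cA, Hc2, id_l.
    apply add_neg. }
  destruct (Hkk Y' dd Hyd) as [u Hu].
  assert (Hkd : k \o (k^* \o dd) = dd) by (rewrite <- Hu, <- (cA k^* k), Hk, id_l; reflexivity).
  assert (Hke : k \o (k^* \o e) = z Y' Y').
  { unfold e. rewrite <- (cA k^* y), Hky, z_l. apply z_r. }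
  assert (Hkk' : k \o k^* = dd).
  { rewrite <- (id_r (k \o k^*)).
    replace (idm Y') with (add e dd) by (unfold dd; rewrite (add_comm (idm Y')), add_cancel; reflexivity).
    rewrite add_compl, !cA, Hke, Hkd, add_0l. reflexivity. }
  assert (He : e = add (idm Y') (neg (k \o k^*))).
  { apply solve_l. rewrite Hkk'. unfold dd. rewrite (add_comm (idm Y')). apply add_cancel. }
  assert (Hjk' : j^* \o k = z K J).
  { transitivity ((k^* \o j)^*); [rewrite star_comp, sinv; reflexivity|]. rewrite Hj0. apply z_star. }
  set (y0i := c' \o y0^*).
  assert (Hi1 : y0i \o y0 = idm X) by (unfold y0i; rewrite cA, Hc0; exact Hc1).
  assert (Hi2 : y0 \o y0i = idm J).
  { unfold y0i. rewrite Hy0', star_comp, sinv, !cA.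
    transitivity (j^* \o (e \o j)); [unfold e; rewrite !cA; reflexivity|].
    rewrite He, add_compr, add_compl, id_l, Hj, neg_compr, neg_compl, cA, <- (cA j^* k), Hjk', z_l,
      neg_z, add_0r. reflexivity. }
  set (s1 := pair f y0). set (s2 := bs1 Y J).
  exists (bp Y J), s1, s2. split.
  - split; [|split].
    + unfold isometry, s1. rewrite pair_star, copair_pair, Hc0, <- Hs. reflexivity.
    + apply bp11.
    + apply pair1.
  - apply iso_coprod.
    exists (pair (y0i \o (bs2 Y J)^*) (add (bs1 Y J)^* (neg (f \o (y0i \o (bs2 Y J)^*))))).
    split.
    + apply ext_in; rewrite cA, ?copair1, ?copair2, id_l; unfold s1, s2; rewrite pair_comp;
        rewrite ?add_compr, ?neg_compr, !cA, ?pair2, ?pair1, ?bp21, ?bp11, ?z_r, ?Hi1, ?id_r.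
      * rewrite add_neg, pair_i1. apply id_r.
      * rewrite neg_z, add_0r, pair_i2. apply id_r.
    + rewrite copair_pair. apply ext_out; rewrite id_r, !add_compl, <- !cA; unfold s1, s2;
        rewrite ?pair1, ?pair2, ?bp11, ?bp21, ?z_l, ?id_l.
      * rewrite (add_comm (bs1 Y J)^*). apply add_cancel.
      * rewrite Hi2, id_l, !add_0r. reflexivity.
Qed.

Theorem main (X Y : ob C) (f : hom X Y) :
  (strictly_contractive f <->
     exists (S : ob C) (s1 : hom X S) (s2 : hom Y S),
       is_codilation f s1 s2 /\ is_coproduct s1 s2) /\
  (strictly_contractive f <->
     exists m : hom (bp X Y) (bp X Y),
       is_matrix2 m (idm X) f^* f (idm Y) /\ hprec (@zero C (bp X Y) (bp X Y)) m) /\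
  (strictly_contractive f ->
     forall (S : ob C) (s1 : hom X S) (s2 : hom Y S),
       is_codilation f s1 s2 -> is_coproduct s1 s2 -> is_codilator f s1 s2).
Proof.
  split; [|split].
  - split; [apply i_ii|]. intros [S [s1 [s2 [H1 H2]]]]. apply iii_i. eapply ii_iii; eassumption.
  - split; [|apply iii_i]. intros H. destruct (i_ii f H) as [S [s1 [s2 [H1 H2]]]].
    eapply ii_iii; eassumption.
  - intros _ S s1 s2. apply codil_part.
Qed.

End Dev.

Theorem theorem7p19 (C : PreHilbert) (X Y : ob C) (f : hom X Y) :
  (strictly_contractive f <->
     exists (S : ob C) (s1 : hom X S) (s2 : hom Y S),
       is_codilation f s1 s2 /\ is_coproduct s1 s2) /\
  (strictly_contractive f <->
     exists m : hom (bp X Y) (bp X Y),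
       is_matrix2 m (idm X) f^* f (idm Y) /\ hprec (@zero C (bp X Y) (bp X Y)) m) /\
  (strictly_contractive f ->
     forall (S : ob C) (s1 : hom X S) (s2 : hom Y S),
       is_codilation f s1 s2 -> is_coproduct s1 s2 -> is_codilator f s1 s2).
Proof. exact (main C X Y f). Qed.
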